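(* Let $n \ge d \ge 1$ and $K\ge 1$. Let $A_+^1,\ldots,A_+^K$ be $n\times n$ real symmetric positive semi-definite matrices and let $\Lambda^1,\ldots,\Lambda^K\in\Delta_+^d$. Let $U^{\mathrm{old}} \in \mathbb{R}^{n\times d}$ satisfy $(U^{\mathrm{old}})^T U^{\mathrm{old}} = I_d$. Let $M = \sum_{k=1}^K A_+^k U^{\mathrm{old}}\Lambda^k \in \mathbb{R}^{n\times d}$ and let $M = B\Sigma C^T$ be a (thin) singular value decomposition, with $B\in\mathbb{R}^{n\times d}$ having orthonormal columns (left singular vectors), $C\in\mathbb{R}^{d\times d}$ orthogonal (right singular vectors), and $\Sigma$ diagonal with nonnegative entries. Set $U^{\mathrm{new}} \equiv BC^T$. Then $(U^{\mathrm{new}})^TU^{\mathrm{new}} = I_d$ and $$\sum_{k=1}^K \left\| A_+^k - U^{\mathrm{new}}\Lambda^k (U^{\mathrm{new}})^T\right\|_F^2 \le \sum_{k=1}^K \left\| A_+^k - U^{\mathrm{old}}\Lambda^k (U^{\mathrm{old}})^T\right\|_F^2.$$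
   Context: $\Delta_+^d$ denotes the set of $d\times d$ real diagonal matrices whose diagonal entries are all nonnegative. $\|\cdot\|_F$ is the Frobenius norm. In the paper, each $A_+^k$ is the positive semi-definite part of a symmetric adjacency matrix $A^k$: if $A^k = VDV^T$ is an eigendecomposition, then $A_+^k = V D_+ V^T$ with $(D_+)_{ii}=\max(D_{ii},0)$. *)

(* Defs.v *)
From HB Require Import structures.
From mathcomp Require Import all_boot all_order all_algebra.
Set Implicit Arguments. Unset Strict Implicit. Unset Printing Implicit Defensive.
Import Order.TTheory GRing.Theory Num.Theory.
Local Open Scope ring_scope.

Definition frob2 (R : numDomainType) (m n : nat) (X : 'M[R]_(m, n)) : R :=
  \sum_(i < m) \sum_(j < n) X i j ^+ 2.

Definition psd_mx (R : numDomainType) (n : nat) (A : 'M[R]_n) : Prop :=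
  A^T = A /\ forall x : 'cV[R]_n, 0 <= (x^T *m A *m x) 0 0.

Definition diag_nonneg (R : numDomainType) (d : nat) (L : 'M[R]_d) : Prop :=
  is_diag_mx L /\ forall i : 'I_d, 0 <= L i i.

(* Main.v *)
Require Import Defs.
From HB Require Import structures.
From mathcomp Require Import all_boot all_order all_algebra.
From mathcomp Require Import ring lra.
Import Order.TTheory GRing.Theory Num.Theory.
Local Open Scope ring_scope.
Set Implicit Arguments.

Lemma tr_diag_mul (R : realFieldType) d (X L : 'M[R]_d) : is_diag_mx L ->
  \tr (X *m L) = \sum_i X i i * L i i.
Proof.
move/is_diag_mxP=> HL; rewrite /mxtrace; apply: eq_bigr => i _.
rewrite mxE (bigD1 i) //= big1 ?addr0 // => j ji; rewrite HL ?mulr0 //.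
Qed.

Lemma diag_tr (R : realFieldType) d (L : 'M[R]_d) : is_diag_mx L -> L^T = L.
Proof.
move/is_diag_mxP=> HL; apply/matrixP=> i j; rewrite mxE.
have [->|ij] := eqVneq i j; first by [].
by rewrite !HL // ?(eq_sym (val j)).
Qed.

Lemma frob2_tr (R : realFieldType) m n (X : 'M[R]_(m, n)) : frob2 X = \tr (X^T *m X).
Proof.
rewrite /frob2 /mxtrace exchange_big; apply: eq_bigr => j _.
rewrite mxE; apply: eq_bigr => i _; by rewrite mxE expr2.
Qed.

Lemma frob2_expand (R : realFieldType) n d (A : 'M[R]_n) (U : 'M[R]_(n, d)) (L : 'M[R]_d) :
  A^T = A -> is_diag_mx L -> U^T *m U = 1%:M ->
  frob2 (A - U *m L *m U^T) = \tr (A *m A) - 2 * \tr (U^T *m A *m U *m L) + \tr (L *m L).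
Proof.
move=> HA HL HU; rewrite frob2_tr.
have HP : (U *m L *m U^T)^T = U *m L *m U^T.
  by rewrite !trmx_mul trmxK diag_tr // mulmxA.
rewrite [(_ - _)^T]linearB /= HA HP mulmxBl !mulmxBr !linearB /=.
have E1 : \tr (U *m L *m U^T *m A) = \tr (A *m (U *m L *m U^T)) by rewrite mxtrace_mulC.
have E2 : \tr (U *m L *m U^T *m (U *m L *m U^T)) = \tr (L *m L).
  rewrite mxtrace_mulC !mulmxA -(mulmxA _ U^T U) HU mulmx1.
  by rewrite [LHS]mxtrace_mulC !mulmxA HU mul1mx.
have E3 : \tr (A *m (U *m L *m U^T)) = \tr (U^T *m A *m U *m L).
  by rewrite !mulmxA [LHS]mxtrace_mulC !mulmxA.
rewrite E1 E2 E3; ring.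
Qed.

Lemma psd_diag_ge0 (R : realFieldType) n d (A : 'M[R]_n) (D : 'M[R]_(n, d)) i :
  psd_mx A -> 0 <= (D^T *m A *m D) i i.
Proof.
move=> [_ HA]; have := HA (col i D).
suff -> : ((col i D)^T *m A *m col i D) 0 0 = (D^T *m A *m D) i i by [].
rewrite !mxE; apply: eq_bigr => k _; rewrite !mxE; congr (_ * _).
by apply: eq_bigr => j _; rewrite !mxE.
Qed.

Lemma cvx (R : realFieldType) n d (A : 'M[R]_n) (L : 'M[R]_d) (U D : 'M[R]_(n, d)) :
  psd_mx A -> diag_nonneg L ->
  \tr (U^T *m A *m U *m L) + 2 * \tr (D^T *m (A *m U *m L))
    <= \tr ((U + D)^T *m A *m (U + D) *m L).
Proof.
move=> HA [HL HL0].
rewrite [(_ + _)^T]linearD /= !(mulmxDl, mulmxDr, mxtraceD).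
have T1 : \tr (U^T *m A *m D *m L) = \tr (D^T *m (A *m U *m L)).
  rewrite -mxtrace_tr !trmx_mul trmxK diag_tr // HA.1.
  by rewrite [LHS]mxtrace_mulC !mulmxA.
have T2 : \tr (D^T *m A *m U *m L) = \tr (D^T *m (A *m U *m L)) by rewrite !mulmxA.
have T3 : 0 <= \tr (D^T *m A *m D *m L).
  rewrite tr_diag_mul //; apply: sumr_ge0 => i _.
  by apply: mulr_ge0; [exact: psd_diag_ge0 | exact: HL0].
rewrite T1 T2; lra.
Qed.

Lemma cs_le1 (R : realFieldType) n d (W B : 'M[R]_(n, d)) i :
  W^T *m W = 1%:M -> B^T *m B = 1%:M -> (W^T *m B) i i <= 1.
Proof.
move=> HW HB.
have hW : \sum_j W j i * W j i = 1.
  move/matrixP: HW => /(_ i i); rewrite !mxE eqxx mulr1n => <-.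
  by apply: eq_bigr => j _; rewrite mxE.
have hB : \sum_j B j i * B j i = 1.
  move/matrixP: HB => /(_ i i); rewrite !mxE eqxx mulr1n => <-.
  by apply: eq_bigr => j _; rewrite mxE.
have h0 : 0 <= \sum_j (W j i - B j i) ^+ 2.
  by apply: sumr_ge0 => j _; exact: sqr_ge0.
have E : \sum_j (W j i - B j i) ^+ 2 =
   \sum_j W j i * W j i + \sum_j B j i * B j i - 2 * \sum_j W j i * B j i.
  rewrite mulr_sumr -big_split -sumrB; apply: eq_bigr => j _; rewrite /=; ring.
have -> : (W^T *m B) i i = \sum_j W j i * B j i.
  by rewrite mxE; apply: eq_bigr => j _; rewrite mxE.
rewrite E hW hB in h0; lra.
Qed.

Theorem proposition2 (R : realFieldType) (n d K : nat)
  (hd : (1 <= d)%N) (hnd : (d <= n)%N) (hK : (1 <= K)%N)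
  (A : 'I_K -> 'M[R]_n) (Lam : 'I_K -> 'M[R]_d)
  (Uold : 'M[R]_(n, d)) (B : 'M[R]_(n, d)) (Sig C : 'M[R]_d) :
  (forall k, psd_mx (A k)) ->
  (forall k, diag_nonneg (Lam k)) ->
  Uold^T *m Uold = 1%:M ->
  B^T *m B = 1%:M ->
  C^T *m C = 1%:M ->
  C *m C^T = 1%:M ->
  diag_nonneg Sig ->
  \sum_(k < K) A k *m Uold *m Lam k = B *m Sig *m C^T ->
  let Unew := B *m C^T in
  Unew^T *m Unew = 1%:M /\
  \sum_(k < K) frob2 (A k - Unew *m Lam k *m Unew^T)
    <= \sum_(k < K) frob2 (A k - Uold *m Lam k *m Uold^T).
Proof.
move=> HA HL HU HB HC HC' [HS HS0] HM Unew.
have HUn : Unew^T *m Unew = 1%:M.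
  by rewrite /Unew trmx_mul trmxK mulmxA -(mulmxA C) HB mulmx1 HC'.
split => //.
set D := Unew - Uold.
have HD : Unew = Uold + D by rewrite /D addrC subrK.
have Hpos : 0 <= \tr (D^T *m (B *m Sig *m C^T)).
  rewrite /D [(_ - _)^T]linearB /= mulmxBl linearB /=.
  have E1 : \tr (Unew^T *m (B *m Sig *m C^T)) = \tr Sig.
    rewrite /Unew trmx_mul trmxK !mulmxA -(mulmxA C B^T B) HB mulmx1.
    by rewrite [LHS]mxtrace_mulC mulmxA HC mul1mx.
  have E2 : \tr (Uold^T *m (B *m Sig *m C^T)) = \sum_i ((Uold *m C)^T *m B) i i * Sig i i.
    rewrite !mulmxA [LHS]mxtrace_mulC !mulmxA tr_diag_mul //.
    by rewrite trmx_mul.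
  have HW : (Uold *m C)^T *m (Uold *m C) = 1%:M.
    by rewrite trmx_mul mulmxA -(mulmxA (trmx C)) HU mulmx1 HC.
  rewrite E1 E2 subr_ge0 /mxtrace; apply: ler_sum => i _.
  have := cs_le1 i HW HB; have := HS0 i; nra.
have Hsum : \sum_(k < K) \tr (D^T *m (A k *m Uold *m Lam k)) = \tr (D^T *m (B *m Sig *m C^T)).
  by rewrite -HM mulmx_sumr raddf_sum.
have Hs : \sum_(k < K) \tr (Uold^T *m A k *m Uold *m Lam k)
   <= \sum_(k < K) \tr (Unew^T *m A k *m Unew *m Lam k).
  have H1 : \sum_(k < K) (\tr (Uold^T *m A k *m Uold *m Lam k)
       + 2 * \tr (D^T *m (A k *m Uold *m Lam k)))
     <= \sum_(k < K) \tr (Unew^T *m A k *m Unew *m Lam k).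
    apply: ler_sum => k _; rewrite HD; exact: cvx.
  rewrite big_split /= -mulr_sumr Hsum in H1; lra.
rewrite (eq_bigr _ (fun k _ => @frob2_expand _ _ _ (A k) Unew (Lam k) (HA k).1 (HL k).1 HUn)).
rewrite (eq_bigr _ (fun k _ => @frob2_expand _ _ _ (A k) Uold (Lam k) (HA k).1 (HL k).1 HU)).
rewrite !big_split /= !sumrN -!mulr_sumr; lra.
Qed.
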